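(* Let $S=\{R_0,\dots,R_d\}$ be a scheme on $X$, $\mathbb F$ a field, $x\in X$, $\mathcal T=\mathcal T(x)$, $E_a^*=E_a^*(x)$, and let $\mathrm{Rad}(\mathcal T)$ be the Jacobson radical of $\mathcal T$. Suppose that $E_a^*ME_b^*=O$ for all $M\in\mathrm{Rad}(\mathcal T)$ and all distinct $R_a,R_b\in S$. Then $\mathcal T$ is semisimple if and only if the $\mathbb F$-algebra $E_c^*\mathcal TE_c^*=\{E_c^*ME_c^*:M\in\mathcal T\}$ (with identity $E_c^*$) is semisimple for every $R_c\in S$.
   Context: Let $X$ be a nonempty finite set. A scheme of class $d$ on $X$ is a partition $S=\{R_0,\dots,R_d\}$ of $X\times X$ into nonempty sets such that $R_0=\{(b,b):b\in X\}$; for each $c$ there is $c'$ with $R_{c'}=\{(f,e):(e,f)\in R_c\}$; and for all $i,j,k$ the intersection number $p_{ij}^k=|\{\ell\in X:(m,\ell)\in R_i,(\ell,n)\in R_j\}|$ does not depend on $(m,n)\in R_k$. For $y\in X$, $yR_a=\{z:(y,z)\in R_a\}$. $A_a\in M_X(\mathbb F)$ is the $(0,1)$ adjacency matrix of $R_a$ and $E_a^*(y)$ is the diagonal $(0,1)$-matrix with ones exactly at positions indexed by $yR_a$. The Terwilliger $\mathbb F$-algebra $\mathcal T(y)$ is the $\mathbb F$-subalgebra of $M_X(\mathbb F)$ generated by $A_0,\dots,A_d,E_0^*(y),\dots,E_d^*(y)$. $O$ is the zero matrix. *)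

(* Defs.v *)
From mathcomp Require Import all_boot all_order all_algebra.
Set Implicit Arguments. Unset Strict Implicit. Unset Printing Implicit Defensive.
Import GRing.Theory.
Local Open Scope ring_scope.

(* The point set X is 'I_n.+1 (a nonempty finite set, up to relabelling).
   A scheme of class d is given by r : X -> X -> 'I_d.+1, where
   R_a = {(y,z) | r y z = a}. *)
Definition is_scheme (n d : nat) (r : 'I_n.+1 -> 'I_n.+1 -> 'I_d.+1) : Prop :=
  [/\
      (forall a : 'I_d.+1, exists y z, r y z = a),
      (forall y z, r y z = ord0 <-> y = z),
      (forall c : 'I_d.+1, exists c' : 'I_d.+1,
          forall e f, r f e = c' <-> r e f = c)
    & (* intersection numbers well defined *)
      (forall i j k : 'I_d.+1, forall m1 n1 m2 n2,
          r m1 n1 = k -> r m2 n2 = k ->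
          #|[set l | (r m1 l == i) && (r l n1 == j)]|
          = #|[set l | (r m2 l == i) && (r l n2 == j)]|)].

Definition adjmx (F : fieldType) (n d : nat) (r : 'I_n.+1 -> 'I_n.+1 -> 'I_d.+1)
  (a : 'I_d.+1) : 'M[F]_n.+1 :=
  \matrix_(y, z) (r y z == a)%:R.

Definition dualidem (F : fieldType) (n d : nat) (r : 'I_n.+1 -> 'I_n.+1 -> 'I_d.+1)
  (x : 'I_n.+1) (a : 'I_d.+1) : 'M[F]_n.+1 :=
  \matrix_(y, z) ((y == z) && (r x z == a))%:R.

Inductive gen_alg (F : fieldType) (n : nat) (G : 'M[F]_n.+1 -> Prop)
  : 'M[F]_n.+1 -> Prop :=
| ga_gen M : G M -> gen_alg G M
| ga_one : gen_alg G 1%:M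
| ga_add M N : gen_alg G M -> gen_alg G N -> gen_alg G (M + N)
| ga_scale (c : F) M : gen_alg G M -> gen_alg G (c *: M)
| ga_mul M N : gen_alg G M -> gen_alg G N -> gen_alg G (M *m N).

Definition terwilliger (F : fieldType) (n d : nat)
  (r : 'I_n.+1 -> 'I_n.+1 -> 'I_d.+1) (x : 'I_n.+1) : 'M[F]_n.+1 -> Prop :=
  gen_alg (fun M => exists a, M = adjmx F r a \/ M = dualidem F r x a).

Definition jacobson_rad (F : fieldType) (n : nat) (A : 'M[F]_n.+1 -> Prop)
  (u : 'M[F]_n.+1) (M : 'M[F]_n.+1) : Prop :=
  A M /\ forall N, A N -> exists U, A U /\ U *m (u - N *m M) = u.

(* finite-dimensional algebra semisimple  <->  Jacobson radical is zero *)
Definition semisimple_alg (F : fieldType) (n : nat) (A : 'M[F]_n.+1 -> Prop)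
  (u : 'M[F]_n.+1) : Prop :=
  forall M, jacobson_rad A u M -> M = 0.

Definition corner (F : fieldType) (n : nat) (A : 'M[F]_n.+1 -> Prop)
  (e : 'M[F]_n.+1) : 'M[F]_n.+1 -> Prop :=
  fun M => exists N, A N /\ M = e *m N *m e.

Arguments adjmx F {n d} r a.
Arguments dualidem F {n d} r x a.
Arguments terwilliger F {n d} r x _.

(* Main.v *)
Require Import Defs.
From mathcomp Require Import all_boot all_order all_algebra.
Import GRing.Theory.
Set Implicit Arguments. Unset Strict Implicit.
Local Open Scope ring_scope.

Lemma swapL (R : pzRingType) (x y w : R) : w * (1 - y * x) = 1 ->
  (1 + x * w * y) * (1 - x * y) = 1.
Proof.
move=> H.
rewrite mulrDl mul1r mulrBr mulr1.
have -> : x * w * y - x * w * y * (x * y) = x * (w * (1 - y * x)) * y.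
  by rewrite !(mulrBr, mulrBl, mulr1, mul1r, mulrA).
by rewrite H mulr1 subrK.
Qed.

Lemma cornL (R : pzRingType) (e m u b : R) : e * b = b -> u * (e - b * m) = e ->
  (1 + m * u * b) * (1 - m * b) = 1.
Proof.
move=> eb H.
rewrite mulrDl mul1r mulrBr mulr1.
have -> : m * u * b - m * u * b * (m * b) = m * (u * (e - b * m)) * b.
  by rewrite !(mulrBr, mulrBl, mulrA) -[m * u * e * b]mulrA eb.
by rewrite H -[m * e * b]mulrA eb subrK.
Qed.

Lemma dir1 (R : pzRingType) (e N a u0 : R) : e * e = e ->
  (e * u0 * e) * (e - (e * a * e) * (e * N * e)) = e ->
  (1 + a * e * (1 + (e * N * e) * (e * u0 * e) * (e * a * e)) * (e * N * e))
    * (1 - a * (e * N * e)) = 1.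
Proof.
move=> ee H.
set m := e * N * e; set b := e * a * e; set u := e * u0 * e.
have eb : e * b = b by rewrite /b !mulrA ee.
have em : e * m = m by rewrite /m !mulrA ee.
have me : m * e = m by rewrite /m -!mulrA ee.
have w1 := cornL eb H.
have mb : m * (a * e) = m * b by rewrite /b !mulrA me.
rewrite -mb in w1.
have := swapL w1.
by rewrite -[a * e * m]mulrA em.
Qed.

Lemma dir2 (R : pzRingType) (e V N0 M : R) : e * e = e ->
  V * (1 - e * N0 * e * M) = 1 ->
  e * V * e * (e - e * N0 * e * (e * M * e)) = e.
Proof.
move=> ee H.
set P := e * N0 * e in H *.
have eP : e * P = P by rewrite /P !mulrA ee.
have Pe : P * e = P by rewrite /P -!mulrA ee.
clearbody P.
have K : e * ((1 - P * M) * e) = (1 - P * M) * e.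
  by rewrite mulrBl mul1r mulrBr ee !mulrA eP.
have -> : e - P * (e * M * e) = (1 - P * M) * e.
  by rewrite mulrBl mul1r !mulrA Pe.
by rewrite -mulrA K mulrA -(mulrA e V) H mulr1 ee.
Qed.

Lemma decomp (R : pzRingType) (I : finType) (E : I -> R) (M : R) :
  \sum_a E a = 1 -> (forall a b, E a * M * E b = 0) -> M = 0.
Proof.
move=> H1 H0.
have -> : M = (\sum_a E a) * M * (\sum_b E b) by rewrite H1 mul1r mulr1.
rewrite mulr_sumr big1 // => b _.
by rewrite !mulr_suml big1 // => a _.
Qed.

Section Mx.
Variables (F : fieldType) (n d : nat) (r : 'I_n.+1 -> 'I_n.+1 -> 'I_d.+1) (x : 'I_n.+1).

Lemma dual_idem a : dualidem F r x a * dualidem F r x a = dualidem F r x a.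
Proof.
apply/matrixP => i j; rewrite !mxE (bigD1 j) //= !mxE big1 ?addr0.
  by rewrite eqxx; case: (r x j == a); rewrite ?andbF ?andbT ?mulr1 ?mulr0.
by move=> k kj; rewrite !mxE (negbTE kj) /= mulr0.
Qed.

Lemma dual_sum : \sum_a dualidem F r x a = 1.
Proof.
apply/matrixP => i j; rewrite summxE !mxE.
under eq_bigr => a _ do rewrite /dualidem mxE.
rewrite (bigD1 (r x j)) //= eqxx andbT big1 ?addr0 //.
by move=> a ha; rewrite (eq_sym (r x j)) (negbTE ha) andbF.
Qed.
End Mx.

Theorem proposition5p11 (F : fieldType) (n d : nat)
  (r : 'I_n.+1 -> 'I_n.+1 -> 'I_d.+1) (x : 'I_n.+1) :
  is_scheme r ->
  (forall M, jacobson_rad (terwilliger F r x) 1%:M M ->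
     forall a b : 'I_d.+1, a != b ->
       dualidem F r x a *m M *m dualidem F r x b = 0) ->
  (semisimple_alg (terwilliger F r x) 1%:M <->
   forall c : 'I_d.+1,
     semisimple_alg (corner (terwilliger F r x) (dualidem F r x c))
                    (dualidem F r x c)).
Proof.
move=> _ Hoff.
have Te : forall c, terwilliger F r x (dualidem F r x c).
  by move=> c; apply: ga_gen; exists c; right.
split.
- move=> ss c M [[N [TN ->]] HJ].
  set e := dualidem F r x c.
  apply: ss; split.
    by apply: ga_mul; [apply: ga_mul; [apply: Te|]|apply: Te].
  move=> a Ta.
  have [u [[u0 [Tu0 ->]] Hu]] := HJ (e *m a *m e)
    (ex_intro _ a (conj Ta erefl)).
  exists (1%:M + a *m e *m (1%:M + (e *m N *m e) *m (e *m u0 *m e) *m (e *m a *m e))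
            *m (e *m N *m e)).
  split; last first.
    exact: (dir1 (dual_idem F r x c) Hu).
  have TeN : terwilliger F r x (e *m N *m e).
    by apply: ga_mul; [apply: ga_mul; [apply: Te|]|apply: Te].
  have Teu : terwilliger F r x (e *m u0 *m e).
    by apply: ga_mul; [apply: ga_mul; [apply: Te|]|apply: Te].
  have Tea : terwilliger F r x (e *m a *m e).
    by apply: ga_mul; [apply: ga_mul; [apply: Te|]|apply: Te].
  apply: ga_add; first exact: ga_one.
  apply: ga_mul => //; apply: ga_mul; first by apply: ga_mul => //; apply: Te.
  apply: ga_add; first exact: ga_one.
  by apply: ga_mul => //; apply: ga_mul.
- move=> H M HJ.
  have Hc : forall c, dualidem F r x c *m M *m dualidem F r x c = 0.
    move=> c; set e := dualidem F r x c.
    apply: (H c); split.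
      by exists M; split => //; case: HJ.
    move=> N' [N0 [TN0 ->]].
    have TN : terwilliger F r x (e *m N0 *m e).
      by apply: ga_mul; [apply: ga_mul; [apply: Te|]|apply: Te].
    have [V [TV HV]] := HJ.2 _ TN.
    exists (e *m V *m e); split.
      by exists V.
    exact: (dir2 (dual_idem F r x c) HV).
  apply: (decomp (dual_sum F r x)) => a b.
  have [->|ab] := eqVneq a b; first exact: Hc.
  exact: Hoff.
Qed.
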